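(* Under the standing assumptions below, let $\{x_n\}\subset X$ and $\{G_n\}\subset\mathcal{L}(X,Y)$ be sequences with $x_n\to x$ in $X$ for some $x\in X$, $G_n\in\partial_B^{sw}S(x_n)$ for all $n\in\mathbb{N}$, and $G_n\to G$ in the weak operator topology of $\mathcal{L}(X,Y)$ for some $G\in\mathcal{L}(X,Y)$. Then $G\in\partial_B^{sw}S(x)$.
   Context: Standing assumptions: $(\Omega,\Sigma,\mu)$ is a complete measure space with real Lebesgue spaces $L^p(\Omega)$, $p\in[1,\infty]$. $Y$ is a real separable reflexive Banach space with $Y\subset L^q(\Omega)$ and the inclusion $Y\hookrightarrow L^q(\Omega)$ continuous and compact, for a fixed $q\in[1,\infty]$. $X$ is a real separable Banach space. $U$ is a real reflexive Banach space with $U\subset X$ and the inclusion $U\hookrightarrow X$ continuous and compact. The map $S:X\to Y$ satisfies $S(\lambda x_1+(1-\lambda)x_2)\le\lambda S(x_1)+(1-\lambda)S(x_2)$ $\mu$-a.e. in $\Omega$ for all $x_1,x_2\in X$, $\lambda\in[0,1]$; and there is an exponent $r\in[1,\infty]$ such that for every $x\in X$ there are $C,\varepsilon>0$ with $\|S(x_1)-S(x_2)\|_Y\le C\|x_1-x_2\|_X$ for all $x_1,x_2\in X$ with $\|x_i-x\|_X\le\varepsilon$, $i=1,2$, and $\|S(x_1+z)-S(x_1)\|_{L^r(\Omega)}\le C\|z\|_U$ for all $x_1\in X$, $z\in U$ with $\|x_1-x\|_X\le\varepsilon$, $\|z\|_U\le\varepsilon$. $S$ is Gâteaux differentiable at $x\in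 X$ if for all $z\in X$ the limit $S'(x;z):=\lim_{t\to0^+}(S(x+tz)-S(x))/t$ exists in $Y$ and $z\mapsto S'(x;z)$ is linear and continuous; then $S'(x):=S'(x;\cdot)\in\mathcal{L}(X,Y)$. $\mathcal{D}_S$ denotes the set of points where $S$ is Gâteaux differentiable (it is known to be dense in $X$). WOT convergence $G_n\to G$ in $\mathcal{L}(X,Y)$ means $G_nz\rightharpoonup Gz$ weakly in $Y$ for all $z\in X$. The strong-weak Bouligand differential is $\partial_B^{sw}S(x):=\{G\in\mathcal{L}(X,Y): \exists\{x_n\}\subset\mathcal{D}_S \text{ with } x_n\to x \text{ in } X \text{ and } S'(x_n)\to G \text{ in the WOT}\}$. *)

(* Defs.v *)
From HB Require Import structures.
From mathcomp Require Import all_boot all_order all_algebra.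
From mathcomp Require Import all_classical all_reals all_analysis.

Set Implicit Arguments.
Unset Strict Implicit.
Unset Printing Implicit Defensive.
Import Order.TTheory GRing.Theory Num.Theory.
Import numFieldNormedType.Exports.
Local Open Scope classical_set_scope.
Local Open Scope ring_scope.

Definition is_linear (R : realType) (V W : normedModType R) (f : V -> W) :=
  forall (a : R) (u v : V), f (a *: u + v) = a *: f u + f v.

Definition is_bdd_linear (R : realType) (V W : normedModType R) (f : V -> W) :=
  is_linear f /\ continuous f.

Definition is_dual (R : realType) (V : normedModType R) (f : V -> R) :=
  (forall (a : R) (u v : V), f (a *: u + v) = a * f u + f v) /\ continuous f.

Definition separable_space (R : realType) (V : normedModType R) :=
  exists D : set V, countable D /\ dense D.

(* Reflexive: every bounded linear functional on V* (V* carrying the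
   operator norm) is the evaluation at some v in V, i.e. the canonical
   embedding V -> V** is onto.  "Phi bounded w.r.t. the operator norm"
   is written out as: |Phi f| <= C * M whenever M bounds f, i.e.
   |f v| <= M |v| for all v. *)
Definition reflexive_space (R : realType) (V : normedModType R) :=
  forall Phi : (V -> R) -> R,
    (forall (a : R) (f g : V -> R), is_dual f -> is_dual g ->
       Phi (fun v => a * f v + g v) = a * Phi f + Phi g) ->
    (exists C : R, forall (f : V -> R) (M : R), is_dual f ->
       (forall v, `|f v| <= M * `|v|) -> `|Phi f| <= C * M) ->
    exists v : V, forall f, is_dual f -> Phi f = f v.

Definition weak_cvg (R : realType) (V : normedModType R) (y : nat -> V) (l : V) :=
  forall f : V -> R, is_dual f -> (fun n => f (y n)) @ \oo --> f l.

Definition WOT_cvg (R : realType) (X Y : normedModType R)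
    (G : nat -> X -> Y) (G0 : X -> Y) :=
  forall z : X, weak_cvg (fun n => G n z) (G0 z).

Definition compact_embedding (R : realType) (U X : normedModType R) (iota : U -> X) :=
  [/\ is_linear iota, injective iota, continuous iota &
      compact (closure (iota @` [set u : U | `|u| <= 1]))].

(* Y is a subspace of L^q(Omega) (via iota, injective modulo a.e.
   equality), and the inclusion Y -> L^q is continuous and compact.
   Compactness is phrased sequentially (L^q is a (pseudo)metric space):
   every bounded sequence in Y has a subsequence converging in L^q. *)
Definition compact_Lq_embedding (R : realType) (d : measure_display)
    (Omega : measurableType d) (mu : {measure set Omega -> \bar R})
    (q : \bar R) (Y : normedModType R) (iota : Y -> Omega -> R) :=
  [/\ (forall (a : R) (u v : Y) (w : Omega), iota (a *: u + v) w = a * iota u w + iota v w),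
      (forall y, measurable_fun setT (iota y) /\ finite_norm mu q (iota y)),
      (forall y, {ae mu, forall w, iota y w = 0} -> y = 0),
      (exists C : R, forall y, ('N[mu]_q[EFin \o iota y] <= (C * `|y|)%:E)%E) &
      (forall (ys : nat -> Y) (M : R), (forall n, `|ys n| <= M) ->
        exists phi : nat -> nat,
          {homo phi : m n / (m < n)%N >-> (m < n)%N} /\
          exists g : Omega -> R, measurable_fun setT g /\ finite_norm mu q g /\
            (fun n => ('N[mu]_q[EFin \o (fun w => iota (ys (phi n)) w - g w)%R])%E) @ \oo --> 0%E)].

Definition ae_convex (R : realType) (d : measure_display)
    (Omega : measurableType d) (mu : {measure set Omega -> \bar R})
    (X Y : normedModType R) (iota : Y -> Omega -> R) (S : X -> Y) :=
  forall (x1 x2 : X) (l : R), 0 <= l <= 1 ->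
    {ae mu, forall w, iota (S (l *: x1 + (1 - l) *: x2)) w
                      <= l * iota (S x1) w + (1 - l) * iota (S x2) w}.

Definition local_lipschitz (R : realType) (d : measure_display)
    (Omega : measurableType d) (mu : {measure set Omega -> \bar R})
    (r : \bar R) (X Y U : normedModType R) (iotaY : Y -> Omega -> R)
    (iotaU : U -> X) (S : X -> Y) :=
  forall x : X, exists C eps : R, 0 < C /\ 0 < eps /\
    (forall x1 x2 : X, `|x1 - x| <= eps -> `|x2 - x| <= eps ->
        `|S x1 - S x2| <= C * `|x1 - x2|) /\
    (forall (x1 : X) (z : U), `|x1 - x| <= eps -> `|z| <= eps ->
        ('N[mu]_r[EFin \o (fun w => iotaY (S (x1 + iotaU z)) w - iotaY (S x1) w)%R]
           <= (C * `|z|)%:E)%E).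

Definition gateaux_derivative (R : realType) (X Y : normedModType R)
    (S : X -> Y) (x : X) (D : X -> Y) :=
  (forall z : X, (fun t : R => t^-1 *: (S (x + t *: z) - S x)) @ (0 : R)^'+ --> D z)
  /\ is_bdd_linear D.

Definition gateaux_differentiable (R : realType) (X Y : normedModType R)
    (S : X -> Y) (x : X) := exists D, gateaux_derivative S x D.

Definition bouligand_sw (R : realType) (X Y : normedModType R)
    (S : X -> Y) (x : X) (G : X -> Y) :=
  is_bdd_linear G /\
  exists (xs : nat -> X) (Ds : nat -> X -> Y),
    (forall n, gateaux_derivative S (xs n) (Ds n)) /\
    xs @ \oo --> x /\ WOT_cvg Ds G.

(* Main.v *)
Require Import Defs.
From HB Require Import structures.
From mathcomp Require Import all_boot all_order all_algebra.
From mathcomp Require Import all_classical all_reals all_analysis.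
From mathcomp Require Import ring lra.
Import Order.TTheory GRing.Theory Num.Theory.
Import numFieldNormedType.Exports.
Local Open Scope classical_set_scope.
Local Open Scope ring_scope.
Set Implicit Arguments.
Unset Strict Implicit.
Lemma enum_dense (R : realType) (V : normedModType R) (D : set V) :
  countable D -> dense D ->
  exists e : nat -> V, forall (y : V) (r : R), 0 < r -> exists k, `|y - e k| < r.
Proof.
move=> /pcard_surjP [g gs] dD.
exists g => y r r0.
have [z [bz Dz]] := dD (ball y r) (ex_intro _ y (ballxx y r0)) (ball_open y r).
have [k _ gk] := gs z Dz.
exists k; rewrite gk.
by move: bz; rewrite -ball_normE.
Qed.

Section HB.
Variables (R : realType) (V : normedModType R) (y0 : V).

Definition goodG (A : set (V * R)) :=
  [/\ (forall v a b, A (v, a) -> A (v, b) -> a = b),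
      (forall (c : R) u v a b, A (u, a) -> A (v, b) -> A (c *: u + v, c * a + b)),
      (forall v a, A (v, a) -> a <= `|v|) &
      (A = set0 \/ A (y0, `|y0|))].

Lemma goodG_chain (F : set (set (V * R))) :
  F `<=` goodG -> total_on F subset -> goodG (\bigcup_(X in F) X).
Proof.
move=> Fg tot; split.
- move=> v a b [X FX Xa] [Y FY Yb].
  have [XY|YX] := tot _ _ FX FY.
  + by have [h _ _ _] := Fg _ FY; apply: (h v); [apply: XY|].
  + by have [h _ _ _] := Fg _ FX; apply: (h v); [|apply: YX].
- move=> c u v a b [X FX Xa] [Y FY Yb].
  have [XY|YX] := tot _ _ FX FY.
  + by exists Y => //; have [_ h _ _] := Fg _ FY; apply: h => //; apply: XY.
  + by exists X => //; have [_ h _ _] := Fg _ FX; apply: h => //; apply: YX.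
- by move=> v a [X FX Xa]; have [_ _ h _] := Fg _ FX; apply: h.
- have [[X FX Xy]|nex] := pselect (exists2 X, F X & X (y0, `|y0|)).
    by right; exists X.
  left; apply/seteqP; split => // p [X FX Xp].
  have [_ _ _ [X0|Xy]] := Fg _ FX.
    by move: Xp; rewrite X0.
  by exfalso; apply: nex; exists X.
Qed.

Lemma goodG_zero A : goodG A -> A (y0, `|y0|) -> A (0, 0).
Proof.
move=> [_ hc _ _] Ay.
have := hc (-1) _ _ _ _ Ay Ay.
by rewrite scaleN1r addNr mulN1r addNr.
Qed.

Lemma goodG_scale A c u a : goodG A -> A (y0, `|y0|) -> A (u, a) -> A (c *: u, c * a).
Proof.
move=> gA Ay Au; have [_ hc _ _] := gA.
have := hc c _ _ _ _ Au (goodG_zero gA Ay).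
by rewrite addr0 addr0.
Qed.

Lemma goodG_base : goodG [set p | exists c : R, p = (c *: y0, c * `|y0|)].
Proof.
split.
- move=> v a b [c [-> ->]] [c' [e ->]].
  have [y00|y0n0] := eqVneq y0 0.
    by rewrite y00 normr0 !mulr0.
  have : (c - c') *: y0 = 0 by rewrite scalerBl e subrr.
  by move/eqP; rewrite scaler_eq0 (negbTE y0n0) orbF subr_eq0 => /eqP ->.
- move=> c u v a b [c1 [-> ->]] [c2 [-> ->]].
  exists (c * c1 + c2); congr pair.
    by rewrite scalerDl scalerA.
  by rewrite mulrDl mulrA.
- move=> v a [c [-> ->]]; rewrite normrZ.
  by rewrite ler_wpM2r // ler_norm.
- by right; exists 1; rewrite scale1r mul1r.
Qed.

Lemma goodG_max A : goodG A -> (forall B, A `<` B -> ~ goodG B) ->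
  A (y0, `|y0|) /\ forall v, exists a, A (v, a).
Proof.
move=> gA mA.
have Ay : A (y0, `|y0|).
  have [_ _ _ [A0|//]] := gA.
  exfalso; apply: (mA _ _ goodG_base); rewrite A0; split => //.
  move=> /(_ (y0, `|y0|)); apply.
  by exists 1; rewrite scale1r mul1r.
split => // v; apply: contrapT => nv.
have [hf hc hd _] := gA.
pose E := [set r | exists u a, A (u, a) /\ r = a - `|u - v|].
have ubE : forall w b, A (w, b) -> ubound E (`|w + v| - b).
  move=> w b Aw _ [u [a [Au ->]]].
  rewrite lerBrDr addrAC lerBlDr.
  have := hd _ _ (hc 1 _ _ _ _ Au Aw); rewrite scale1r mul1r => h.
  apply: (le_trans h).
  have -> : u + w = (u - v) + (w + v) by rewrite addrACA addNr addr0.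
  by rewrite addrC; apply: ler_normD.
have E0 : E !=set0.
  by exists (0 - `|0 - v|); exists 0, 0; split => //; apply: goodG_zero.
have hsE : has_sup E by split => //; exists (`|0 + v| - 0); apply: (ubE _ _ (goodG_zero gA Ay)).
pose c := sup E.
have cle : forall w b, A (w, b) -> c <= `|w + v| - b.
  by move=> w b Aw; apply: ge_sup => //; apply: ubE.
have cge : forall u a, A (u, a) -> a - `|u - v| <= c.
  by move=> u a Au; apply: sup_upper_bound => //; exists u, a.
pose B := [set p | exists u a (t : R), A (u, a) /\ p = (u + t *: v, a + t * c)].
have AB : A `<=` B.
  by case=> u a Au; exists u, a, 0; rewrite scale0r mul0r !addr0.
apply: (mA B).
  split => // /(_ (v, c)) h; apply: nv; exists c; apply: h.
  exists 0, 0, 1; rewrite scale1r mul1r !add0r; split => //.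
  exact: goodG_zero.
split.
- move=> w a1 a2 [u [a [t [Au [-> ->]]]]] [u' [a' [t' [Au' [e ->]]]]].
  have [tt|tnt] := eqVneq t t'.
    rewrite -tt in e *; move/addIr: e => e; rewrite -e in Au'.
    by rewrite (hf _ _ _ Au Au').
  exfalso; apply: nv.
  exists ((t - t')^-1 * (a' - a)).
  have vE : v = (t - t')^-1 *: (u' - u).
    apply: (@scalerI _ _ (t - t')); first by rewrite subr_eq0.
    rewrite scalerA mulfV ?subr_eq0 // scale1r scalerBl.
    by rewrite -[in RHS](addrK (t' *: v) u') -e [u + _]addrC addrAC addrK.
  rewrite vE; apply: goodG_scale => //.
  have := hc (-1) _ _ _ _ Au Au'.
  by rewrite scaleN1r mulN1r addrC [- a + _]addrC.
- move=> c0 w1 w2 b1 b2 [u [a [t [Au [-> ->]]]]] [u' [a' [t' [Au' [-> ->]]]]].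
  exists (c0 *: u + u'), (c0 * a + a'), (c0 * t + t'); split; first exact: hc.
  congr pair.
    by rewrite scalerDr scalerDl scalerA; rewrite !addrA; congr (_ + _); rewrite -!addrA; congr (_ + _); rewrite addrC.
  by rewrite mulrDr mulrDl mulrA !addrA; congr (_ + _); rewrite -!addrA; congr (_ + _); rewrite addrC.
- move=> w b [u [a [t [Au [-> ->]]]]].
  have [t0|tn0] := eqVneq t 0.
    by rewrite t0 scale0r mul0r !addr0; apply: hd.
  have [tp|tn] := ltP 0 t.
    have := cle _ _ (goodG_scale t^-1 gA Ay Au).
    move=> h.
    have : t * c <= t * (`|t^-1 *: u + v| - t^-1 * a) by rewrite ler_pM2l.
    rewrite mulrBr mulrA mulfV // mul1r.
    have -> : t * `|t^-1 *: u + v| = `|u + t *: v|.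
      rewrite -{1}(gtr0_norm tp) -normrZ scalerDr scalerA mulfV // scale1r.
      by [].
    by rewrite lerBrDl addrC.
  have sp : 0 < - t by rewrite oppr_gt0 lt_neqAle tn tn0.
  have := cge _ _ (goodG_scale (- t)^-1 gA Ay Au).
  move=> h.
  have : (- t) * ((- t)^-1 * a - `|(- t)^-1 *: u - v|) <= (- t) * c by rewrite ler_pM2l.
  rewrite mulrBr mulrA mulfV ?oppr_eq0 // mul1r.
  have -> : - t * `|(- t)^-1 *: u - v| = `|u + t *: v|.
    rewrite -{1}(gtr0_norm sp) -normrZ scalerBr scalerA mulfV ?oppr_eq0 // scale1r.
    by rewrite scaleNr opprK.
  by rewrite mulNr lerBlDr -lerBlDl opprK addrC.
- right; exists y0, `|y0|, 0; rewrite scale0r mul0r !addr0; split => //.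
Qed.

Lemma hahn_banach_norm : exists f : V -> R,
  [/\ (forall (a : R) u v, f (a *: u + v) = a * f u + f v),
      (forall v, `|f v| <= `|v|) & f y0 = `|y0|].
Proof.
have [A [gA mA]] := @Zorn_bigcup _ goodG goodG_chain.
have [Ay tot] := goodG_max gA mA.
have [hf hc hd _] := gA.
pose f v := xget 0 [set a | A (v, a)].
have fA v : A (v, f v) by exact: (xgetPex 0 (tot v)).
exists f; split.
- move=> a u v; apply: (hf (a *: u + v)); [exact: fA | exact: hc].
- move=> v; rewrite ler_norml; apply/andP; split; last exact: hd.
  have := hd _ _ (hc (-1) _ _ _ _ (fA v) (goodG_zero gA Ay)).
  by rewrite scaleN1r mulN1r !addr0 normrN lerNl.
- exact: hf (fA y0) Ay.
Qed.
End HB.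


Section Lin.
Variables (R : realType) (V W : normedModType R).

Lemma dlin0 (h : V -> R) : (forall (a : R) u v, h (a *: u + v) = a * h u + h v) -> h 0 = 0.
Proof.
move=> hl; have := hl 1 0 0; rewrite scale1r addr0 mul1r => /eqP.
by rewrite eq_sym -subr_eq0 addrK => /eqP.
Qed.

Lemma dlinZ (h : V -> R) : (forall (a : R) u v, h (a *: u + v) = a * h u + h v) ->
  forall a v, h (a *: v) = a * h v.
Proof. by move=> hl a v; have := hl a v 0; rewrite addr0 dlin0 // addr0. Qed.

Lemma dlinD (h : V -> R) : (forall (a : R) u v, h (a *: u + v) = a * h u + h v) ->
  forall u v, h (u + v) = h u + h v.
Proof. by move=> hl u v; have := hl 1 u v; rewrite scale1r mul1r. Qed.

Lemma dlinB (h : V -> R) : (forall (a : R) u v, h (a *: u + v) = a * h u + h v) ->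
  forall u v, h (u - v) = h u - h v.
Proof.
move=> hl u v; have := hl (-1) v u; rewrite scaleN1r mulN1r.
by rewrite addrC [- h v + _]addrC.
Qed.

Lemma llin0 (h : V -> W) : is_linear h -> h 0 = 0.
Proof.
move=> hl; have := hl 1 0 0; rewrite scale1r addr0 scale1r => /eqP.
by rewrite eq_sym -subr_eq0 addrK => /eqP.
Qed.

Lemma llinZ (h : V -> W) : is_linear h -> forall a v, h (a *: v) = a *: h v.
Proof. by move=> hl a v; have := hl a v 0; rewrite addr0 llin0 // addr0. Qed.

Lemma llinB (h : V -> W) : is_linear h -> forall u v, h (u - v) = h u - h v.
Proof.
move=> hl u v; have := hl (-1) v u; rewrite !scaleN1r.
by rewrite addrC [- h v + _]addrC.
Qed.

Lemma lin_bounded (h : V -> W) : is_bdd_linear h ->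
  exists k : R, 0 < k /\ forall v, `|h v| <= k * `|v|.
Proof.
move=> [hl hc].
have := hc 0; move/cvgrPdist_lt => /(_ 1 ltr01).
rewrite llin0 // => /nbhs_ballP [d d0 hd].
exists (2 / d); split; first by rewrite divr_gt0.
move=> v; have [->|vn0] := eqVneq v 0.
  by rewrite llin0 // !normr0 mulr0.
have nv : 0 < `|v| by rewrite normr_gt0.
pose c := d / 2 / `|v|.
have c0 : 0 < c by rewrite /c !divr_gt0.
have : ball 0 d (c *: v).
  rewrite -ball_normE /= sub0r normrN normrZ gtr0_norm // /c divfK ?gt_eqF //.
  by rewrite ltr_pdivrMr // ltr_pMr // ltr1n.
move/hd => /=; rewrite sub0r normrN llinZ // normrZ gtr0_norm // => h1.
have : `|h v| < c^-1 by rewrite -(ltr_pM2l c0) mulfV ?gt_eqF.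
move/ltW => h2; apply: (le_trans h2).
  by rewrite [X in X <= _](_ : _ = 2 / d * `|v|) // /c !invfM !invrK; ring.
Qed.

Lemma dual_bounded (h : V -> R) : is_dual h ->
  exists k : R, 0 < k /\ forall v, `|h v| <= k * `|v|.
Proof.
move=> [hl hc].
have := hc 0; move/cvgrPdist_lt => /(_ 1 ltr01).
rewrite dlin0 // => /nbhs_ballP [d d0 hd].
exists (2 / d); split; first by rewrite divr_gt0.
move=> v; have [->|vn0] := eqVneq v 0.
  by rewrite dlin0 // !normr0 mulr0.
have nv : 0 < `|v| by rewrite normr_gt0.
pose c := d / 2 / `|v|.
have c0 : 0 < c by rewrite /c !divr_gt0.
have : ball 0 d (c *: v).
  rewrite -ball_normE /= sub0r normrN normrZ gtr0_norm // /c divfK ?gt_eqF //.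
  by rewrite ltr_pdivrMr // ltr_pMr // ltr1n.
move/hd => /=; rewrite sub0r normrN dlinZ // normrM gtr0_norm // => h1.
have : `|h v| < c^-1 by rewrite -(ltr_pM2l c0) mulfV ?gt_eqF.
move/ltW => h2; apply: (le_trans h2).
by rewrite [X in X <= _](_ : _ = 2 / d * `|v|) // /c !invfM !invrK; ring.
Qed.

Lemma lip_continuous (h : V -> R) (k : R) :
  (forall (a : R) u v, h (a *: u + v) = a * h u + h v) ->
  (forall v, `|h v| <= k * `|v|) -> is_dual h.
Proof.
move=> hl hb; split => // x.
apply/cvgrPdist_lt => e e0.
have k1 : 0 < `|k| + 1 by rewrite ltr_pwDr.
near=> y.
rewrite -dlinB //; apply: (le_lt_trans (hb _)).
apply: (@le_lt_trans _ _ ((`|k| + 1) * `|x - y|)).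
  by rewrite ler_wpM2r // (le_trans (ler_norm k)) // lerDl.
rewrite -ltr_pdivlMl //.
near: y; apply/nbhs_ballP; exists ((`|k| + 1)^-1 * e); first by rewrite /= mulr_gt0 // invr_gt0.
by move=> y; rewrite -ball_normE.
Unshelve. all: by end_near.
Qed.
End Lin.


Lemma sep_family (R : realType) (V : normedModType R) : separable_space V ->
  exists f : nat -> V -> R, [/\ (forall k, is_dual (f k)),
    (forall k v, `|f k v| <= `|v|) & (forall y, (forall k, f k y = 0) -> y = 0)].
Proof.
move=> [D [cD dD]]; have [e he] := enum_dense cD dD.
have [f hf] := choice (fun k => @hahn_banach_norm _ _ (e k)).
exists f; split.
- move=> k; have [l b _] := hf k; apply: (@lip_continuous _ _ _ 1) => // v.
  by rewrite mul1r.
- by move=> k v; have [_ b _] := hf k.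
move=> y h0; apply/eqP; apply: contraT => yn0.
have ny : 0 < `|y| by rewrite normr_gt0.
have [k hk] := he y (`|y| / 2) (divr_gt0 ny (ltr0Sn _ 1)).
have [l b fe] := hf k.
have : f k y = f k (e k) - f k (e k - y).
  by rewrite (dlinB l) opprB addrC subrK.
rewrite h0 fe => /esym /eqP; rewrite subr_eq0 => /eqP eq.
have h1 := b (e k - y); rewrite -eq normr_id in h1.
have h2 : `|y| <= `|e k| + `|y - e k|.
  by rewrite -[X in `|X|](subrK (e k)) addrC ler_normD.
rewrite distrC in hk.
rewrite distrC in h2; lra.
Qed.


Section Ulim.
Context (R : realType) (U : set_system nat) {PU : ProperFilter U} (UU : UltraFilter U).

Lemma ulim_ex (s : nat -> R) (B : R) : (\forall n \near U, `|s n| <= B) ->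
  exists l : R, s @ U --> l.
Proof.
move=> hB.
have Fseg : (s @ U) `[- B, B]%classic.
  apply: filterS hB => n /=; rewrite in_itv /= -ler_norml //.
have [p [_ clp]] := segment_compact (F := s @ U) _ Fseg.
exists p => N Np.
have [//|hc] := in_ultra_setVsetC (s @^-1` N) UU.
exfalso.
have [z [nz zN]] := clp (~` N) N hc Np.
exact: nz.
Qed.

Definition ulim (s : nat -> R) := xget 0 [set l : R | s @ U --> l].

Lemma ulimP (s : nat -> R) (B : R) : (\forall n \near U, `|s n| <= B) -> s @ U --> ulim s.
Proof. by move=> hB; apply: (xgetPex 0 (ulim_ex hB)). Qed.

Lemma ulimE (s : nat -> R) (B : R) (l : R) : (\forall n \near U, `|s n| <= B) ->
  s @ U --> l -> ulim s = l.
Proof. by move=> hB hl; exact: (cvg_unique (@Rhausdorff R) (ulimP hB) hl). Qed.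
End Ulim.

Lemma weak_crit (R : realType) (Y : normedModType R) (Yr : reflexive_space Y)
  (f : nat -> Y -> R) (fd : forall k, is_dual (f k))
  (fsep : forall y, (forall k, f k y = 0) -> y = 0)
  (u : nat -> Y) (u0 : Y) (B : R) :
  (\forall n \near \oo, `|u n| <= B) ->
  (forall k, (fun n => f k (u n)) @ \oo --> f k u0) -> weak_cvg u u0.
Proof.
move=> hB hk g gd.
have [[y1 y1n0]|triv] := pselect (exists y : Y, y != 0); last first.
  have z : forall y : Y, y = 0.
    by move=> y; apply/eqP; apply: contraT => h; exfalso; apply: triv; exists y.
  have -> : (fun n => g (u n)) = fun=> g u0 by apply: funext => n; rewrite (z u0) (z (u n)).
  exact: cvg_cst.
apply: contrapT => ncv.
have [e e0 ne] : exists2 e : R, 0 < e &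
    forall n0, exists n, (n0 <= n)%N /\ e <= `|g u0 - g (u n)|.
  apply: contrapT => H; apply: ncv; apply/cvgrPdist_lt => e e0.
  have [n0 hn0] : exists n0, forall n, (n0 <= n)%N -> `|g u0 - g (u n)| < e.
    apply: contrapT => H2; apply: H; exists e => // n0.
    apply: contrapT => H3; apply: H2; exists n0 => n hn.
    rewrite ltNge; apply/negP => hle; apply: H3; exists n; split => //.
  by exists n0.
pose F0 := filter_from setT (fun n0 => [set n | (n0 <= n)%N /\ e <= `|g u0 - g (u n)|]).
have F0P : ProperFilter F0.
  apply: filter_from_proper; last by move=> i _; have [n [h1 h2]] := ne i; exists n.
  apply: filter_from_filter; first by exists 0%N.
  move=> i j _ _; exists (maxn i j) => // n /= [h1 h2].
  split; split => //.
    exact: leq_trans (leq_maxl i j) h1.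
  exact: leq_trans (leq_maxr i j) h1.
have [U [UU F0U]] := ultraFilterLemma F0P.
have PU : ProperFilter U := ultra_proper.
have ooU : forall A, \oo A -> U A.
  move=> A [N _ hN]; apply: F0U; exists N => // n [h _]; exact: hN.
have UE : U [set n | e <= `|g u0 - g (u n)|].
  by apply: F0U; exists 0%N => // n [].
have UB : \forall n \near U, `|u n| <= B := ooU _ hB.
have hbound : forall h, is_dual h -> exists M, \forall n \near U, `|h (u n)| <= M.
  move=> h hd; have [k [k0 hk']] := dual_bounded hd.
  exists (k * B); apply: filterS UB => n hn.
  by apply: (le_trans (hk' _)); rewrite ler_pM2l.
pose Phi (h : Y -> R) := ulim U (fun n => h (u n)).
have Phi_cvg : forall h, is_dual h -> (fun n => h (u n)) @ U --> Phi h.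
  by move=> h hd; have [M hM] := hbound h hd; apply: (ulimP UU hM).
have [v hv] : exists v : Y, forall h, is_dual h -> Phi h = h v.
  apply: Yr.
    move=> a h1 h2 hd1 hd2.
    have [M1 hM1] := hbound h1 hd1; have [M2 hM2] := hbound h2 hd2.
    apply: (@ulimE _ _ _ UU _ (`|a| * M1 + M2)).
      apply: filterS2 hM1 hM2 => n b1 b2.
      apply: (le_trans (ler_normD _ _)); rewrite normrM lerD //.
      by rewrite ler_wpM2l.
    by apply: cvgD; [apply: cvgMr; exact: Phi_cvg | exact: Phi_cvg].
  exists B => h M hd hM.
  have M0 : 0 <= M.
    have := hM y1; have : 0 < `|y1| by rewrite normr_gt0.
    move=> p1 p2; rewrite -(pmulr_lge0 _ p1); exact: le_trans (normr_ge0 _) p2.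
  have : [set x : R | x <= B * M] `|Phi h|.
    apply: (@closed_cvg _ _ _ _ (fun n => `|h (u n)|) _ (@closed_le _ _) _ _ (cvg_norm (Phi_cvg _ hd))).
    apply: filterS UB => n hn; apply: (le_trans (hM _)).
    by rewrite mulrC ler_wpM2r.
  by [].
have vu : v = u0.
  apply/eqP; rewrite -subr_eq0; apply/eqP; apply: fsep => k.
  have [fl _] := fd k.
  rewrite (dlinB fl) -hv //; apply/eqP; rewrite subr_eq0; apply/eqP.
  have [M hM] := hbound _ (fd k).
  apply: (@ulimE _ _ _ UU _ M) => // A /(hk k) /ooU //.
have : [set x : R | e <= x] `|g u0 - Phi g|.
  apply: (@closed_cvg _ _ _ _ (fun n => `|g u0 - g (u n)|) _ (@closed_ge _ _) _ _ (cvg_norm (cvgB (cvg_cst _) (Phi_cvg _ gd)))).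
  exact: UE.
rewrite /= hv // vu subrr normr0 => h.
by move: (lt_le_trans e0 h); rewrite ltxx.
Qed.


Lemma deriv_bound (R : realType) (X Y : normedModType R) (S : X -> Y) (x' x : X)
  (D : X -> Y) (C eps : R) :
  gateaux_derivative S x' D -> `|x' - x| < eps ->
  (forall x1 x2 : X, `|x1 - x| <= eps -> `|x2 - x| <= eps ->
      `|S x1 - S x2| <= C * `|x1 - x2|) ->
  forall z, `|D z| <= C * `|z|.
Proof.
move=> [hd _] hx hl z.
have r0 : 0 < (eps - `|x' - x|) / (`|z| + 1).
  by rewrite divr_gt0 // ?subr_gt0 // ltr_pwDr.
apply: (@closed_cvg _ _ _ _ (fun t : R => `|t^-1 *: (S (x' + t *: z) - S x')|) _
   (@closed_le _ _) _ _ (cvg_norm (hd z))).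
near=> t.
have t0 : 0 < t by near: t; exact: nbhs_right_gt.
have tr : t < (eps - `|x' - x|) / (`|z| + 1) by near: t; exact: nbhs_right_lt.
have tz : t * `|z| <= eps - `|x' - x|.
  apply: le_trans (ltW (_ : t * (`|z| + 1) < _)).
    by apply: ler_wpM2l; [exact: ltW | rewrite lerDl].
  by rewrite -ltr_pdivlMr // ltr_pwDr.
rewrite /= normrZ gtr0_norm ?invr_gt0 //.
rewrite -ler_pdivlMl ?invr_gt0 // invrK.
apply: le_trans (hl _ _ _ _) _.
- rewrite addrAC; apply: le_trans (ler_normD _ _) _.
  by rewrite normrZ gtr0_norm //; lra.
- exact: ltW.
- by rewrite addrC addKr normrZ gtr0_norm // mulrCA.
Unshelve. all: by end_near.
Qed.

Unset Implicit Arguments.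
Set Strict Implicit.

Theorem mainTheorem3
  (R : realType) (d : measure_display) (Omega : measurableType d)
  (mu : {measure set Omega -> \bar R})
  (mu_complete : measure_is_complete mu)
  (q r : \bar R) (q1 : (1 <= q)%E) (r1 : (1 <= r)%E)
  (X Y U : completeNormedModType R)
  (iotaY : Y -> Omega -> R) (iotaU : U -> X)
  (Y_sep : separable_space Y) (Y_refl : reflexive_space Y)
  (Y_emb : compact_Lq_embedding mu q iotaY)
  (X_sep : separable_space X)
  (U_refl : reflexive_space U)
  (U_emb : compact_embedding iotaU)
  (S : X -> Y)
  (S_convex : ae_convex mu iotaY S)
  (S_lip : local_lipschitz mu r iotaY iotaU S)
  (xs : nat -> X) (x : X) (Gs : nat -> X -> Y) (G : X -> Y) :
  xs @ \oo --> x ->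
  (forall n, bouligand_sw S (xs n) (Gs n)) ->
  is_bdd_linear G ->
  WOT_cvg Gs G ->
  bouligand_sw S x G.
Proof.
move=> xsx hB Gl GW.
have [C [eps [C0 [e0 [hl _]]]]] := S_lip x.
have [f [fd fb fsep]] := @sep_family _ _ Y_sep.
have [D [cD dD]] := X_sep.
have [eX heX] := enum_dense cD dD.
have H : forall n, exists p : (nat -> X) * (nat -> X -> Y),
    [/\ (forall m, gateaux_derivative S (p.1 m) (p.2 m)), p.1 @ \oo --> xs n &
        WOT_cvg p.2 (Gs n)].
  move=> n; have [_ [xn [Dn [h1 [h2 h3]]]]] := hB n.
  by exists (xn, Dn).
have [P hP] := choice H.
pose XS n := (P n).1; pose DS n := (P n).2.
have Hm : forall n, exists m, `|xs n - XS n m| < n.+1%:R^-1 /\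
    forall j k, (j <= n)%N -> (k <= n)%N ->
      `|f k (Gs n (eX j)) - f k (DS n m (eX j))| < n.+1%:R^-1.
  move=> n; have [_ hx hW] := hP n.
  have np : 0 < n.+1%:R^-1 :> R by rewrite invr_gt0.
  have h1 : \forall m \near \oo, `|xs n - XS n m| < n.+1%:R^-1.
    by move/cvgrPdist_lt : hx => /(_ _ np).
  have h2 : \forall m \near \oo, forall j k : 'I_n.+1,
      `|f k (Gs n (eX j)) - f k (DS n m (eX j))| < n.+1%:R^-1.
    apply: filter_forall => j; apply: filter_forall => k.
    by have /cvgrPdist_lt := hW (eX j) (f k) (fd k); apply.
  have [m [m1 m2]] := filter_ex (filterI h1 h2).
  exists m; split => // j k jn kn.
  exact: (m2 (Ordinal (jn : (j < n.+1)%N)) (Ordinal (kn : (k < n.+1)%N))).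
have [mm hmm] := choice Hm.
pose xs' n := XS n (mm n); pose Ds' n := DS n (mm n).
have xs'x : xs' @ \oo --> x.
  apply/cvgrPdist_lt => e ep.
  have e2 : 0 < e / 2 by rewrite divr_gt0.
  move/cvgrPdist_lt : xsx => /(_ _ e2) h1.
  have h2 := near_infty_natSinv_lt (PosNum e2).
  near=> n.
  have a1 : `|x - xs n| < e / 2 by near: n.
  have a2 : n.+1%:R^-1 < e / 2 by near: n.
  have [a3 _] := hmm n.
  have : `|x - xs' n| <= `|x - xs n| + `|xs n - xs' n|.
    by rewrite [X in `|X| <= _](_ : _ = (x - xs n) + (xs n - xs' n)) ?ler_normD // addrA subrK.
  rewrite /xs' => h; apply: (le_lt_trans h); rewrite [e]splitr; apply: ltrD => //; exact: lt_trans a3 a2.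
split => //; exists xs', Ds'; split.
  by move=> n; have [h' _ _] := hP n; exact: h'.
have gd : forall n, gateaux_derivative S (xs' n) (Ds' n).
  by move=> n; have [h' _ _] := hP n; exact: h'.
split => // z.
have xs'ev : \forall n \near \oo, `|xs' n - x| < eps.
  by move/cvgrPdist_lt : xs'x => /(_ _ e0); apply: filterS => n; rewrite distrC.
have Dbound : \forall n \near \oo, forall w, `|Ds' n w| <= C * `|w|.
  by apply: filterS xs'ev => n hn w; apply: (deriv_bound (gd n) hn hl).
apply: (@weak_crit _ _ Y_refl f fd fsep _ _ (C * `|z|)).
  by apply: filterS Dbound => n hn; apply: hn.
move=> k; apply/cvgrPdist_lt => e ep.
have [kG [kG0 hkG]] := lin_bounded Gl.
have kC : 0 < kG + C by rewrite addr_gt0.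
pose dl := e / (4 * (kG + C)).
have dl0 : 0 < dl by rewrite /dl divr_gt0 // mulr_gt0.
have hdl : kG * dl + C * dl = e / 4.
  rewrite -mulrDl /dl; field; rewrite ?gt_eqF //.
have [j hj] := heX z dl dl0.
have e4 : 0 < e / 4 by rewrite divr_gt0.
have t2 : \forall n \near \oo, `|f k (G (eX j)) - f k (Gs n (eX j))| < e / 4.
  by have /cvgrPdist_lt := GW (eX j) (f k) (fd k); apply.
have t3 := near_infty_natSinv_lt (PosNum e4).
have tj : \forall n \near \oo, (j <= n)%N /\ (k <= n)%N.
  by exists (maxn j k) => // n /= h; split; [exact: leq_trans (leq_maxl j k) h | exact: leq_trans (leq_maxr j k) h].
have [fl _] := fd k.
have Gl1 := Gl.1.
have Dl1 : forall n, is_linear (Ds' n) by move=> n; have [_ [h _]] := gd n.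
near=> n.
have Dn : forall w, `|Ds' n w| <= C * `|w| by near: n.
have a2 : `|f k (G (eX j)) - f k (Gs n (eX j))| < e / 4 by near: n.
have a3 : n.+1%:R^-1 < e / 4 by near: n.
have [jn kn] : (j <= n)%N /\ (k <= n)%N by near: n.
have b3 := (hmm n).2 j k jn kn.
have h1 : `|f k (G z) - f k (G (eX j))| <= kG * dl.
  rewrite -(dlinB fl) -(llinB Gl1); apply: le_trans (fb _ _) _.
  apply: le_trans (hkG _) _; apply: ler_wpM2l; [exact: ltW | exact: ltW].
have h4 : `|f k (Ds' n (eX j)) - f k (Ds' n z)| <= C * dl.
  rewrite -(dlinB fl) -(llinB (Dl1 n)); apply: le_trans (fb _ _) _.
  apply: le_trans (Dn _) _; apply: ler_wpM2l; [exact: ltW | rewrite distrC; exact: ltW].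
have tri : forall a b c d1 g : R, `|a - g| <= `|a - b| + `|b - c| + `|c - d1| + `|d1 - g|.
  move=> a b c d1 g.
  have -> : a - g = (a - b) + (b - c) + (c - d1) + (d1 - g).
    by rewrite !addrA !subrK.
  by apply: le_trans (ler_normD _ _) _; rewrite lerD2r; apply: le_trans (ler_normD _ _) _; rewrite lerD2r ler_normD.
have := tri (f k (G z)) (f k (G (eX j))) (f k (Gs n (eX j))) (f k (Ds' n (eX j))) (f k (Ds' n z)).
rewrite /Ds' in h4 * => ht.
apply: (le_lt_trans ht).
have b3' := lt_trans b3 a3.
apply: (@lt_le_trans _ _ (kG * dl + e / 4 + e / 4 + C * dl)).
  apply: ltr_leD; last exact: h4.
  apply: ltrD; last exact: b3'.
  exact: ler_ltD.
have -> : kG * dl + e / 4 + e / 4 + C * dl = (kG * dl + C * dl) + (e / 4 + e / 4) by ring.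
rewrite hdl.
lra.
Unshelve. all: by end_near.
Qed.
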